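(* Let $n\ge2$, $0\le m\le n(n-1)$ and $\kappa=\lfloor \frac{m}{n-1}\rfloor$. Then $\mathbb G(n,m)$ is the union of $\kappa$ simple $n$-vertex directed stars rooted at vertices $1,\dots,\kappa$ respectively, and the $n$-vertex simple directed forest consisting of an $(m-\kappa(n-1)+1)$-vertex directed star rooted at vertex $\kappa+1$ together with $n-(m-\kappa(n-1)+1)$ isolated vertices (when $m=\kappa(n-1)$ this forest has no arcs).
   Context: For integers $n\ge2$ and $0\le m\le n(n-1)$, $\mathbb G(n,m)$ is the simple directed graph on vertex set $\{1,\dots,n\}$ whose arc set is $\{(\lceil \frac{i}{n-1}\rceil,\ n-((i-1)\bmod n)) : i=1,\dots,m\}$, where an arc $(j,k)$ goes from $j$ to $k$ and $a\bmod b\in\{0,\dots,b-1\}$; these $m$ pairs are pairwise distinct pairs of distinct vertices. The $n$-vertex directed star rooted at $r$ has arcs $(r,j)$ for all $j\ne r$; a $k$-vertex directed star rooted at $r$ consists of $r$ and $k-1$ other vertices with arcs from $r$ to each of them. A union of graphs on the same vertex set has as arc set the union of their arc sets. *)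

(* Defs.v *)
From mathcomp Require Import all_boot.
Set Implicit Arguments. Unset Strict Implicit. Unset Printing Implicit Defensive.

(* Vertices are the naturals 1..n. *)
Definition ceil_div (a b : nat) : nat := (a + b.-1) %/ b.

Definition Garc_i (n i : nat) : nat * nat := (ceil_div i n.-1, n - (i.-1 %% n)).

Definition Garc (n m j k : nat) : Prop :=
  exists i, 1 <= i <= m /\ Garc_i n i = (j, k).

Definition star_arc (n r j k : nat) : Prop :=
  j = r /\ 1 <= k <= n /\ k <> r.

(* Main.v *)
Require Import Defs.
From mathcomp Require Import all_boot zify.

Definition kfun (n j d : nat) := if d < j.-1 then j.-1 - d else n + j.-1 - d.

Lemma kfun_mod n j d : 1 <= j <= n -> d < n.-1 ->
  n - ((j.-1 * n.-1 + d) %% n) = kfun n j d.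
Proof.
move=> /andP[j1 jn] dn; rewrite /kfun.
case: ltnP => hd.
- have -> : j.-1 * n.-1 + d = (j.-2) * n + (n + d + 1 - j) by nia.
  rewrite modnMDl modn_small; lia.
- have -> : j.-1 * n.-1 + d = (j.-1) * n + (d + 1 - j) by nia.
  rewrite modnMDl modn_small; lia.
Qed.

Lemma kfun_range n j d : 1 <= j <= n -> d < n.-1 ->
  1 <= kfun n j d <= n /\ kfun n j d <> j.
Proof. move=> ? ?; rewrite /kfun; case: (ltnP d j.-1) => ?; (split; [apply/andP; split|]); lia. Qed.

Lemma kfun_inj n j d1 d2 : 1 <= j <= n -> d1 < n.-1 -> d2 < n.-1 ->
  kfun n j d1 = kfun n j d2 -> d1 = d2.
Proof. move=> ? ? ?; rewrite /kfun; case: (ltnP d1 j.-1); case: (ltnP d2 j.-1); lia. Qed.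

Lemma kfun_surj n j k : 1 <= j <= n -> 1 <= k <= n -> k <> j ->
  exists2 d, d < n.-1 & kfun n j d = k.
Proof.
move=> hj hk kj; case: (ltnP k j) => h.
- exists (j.-1 - k); first lia. rewrite /kfun; case: ifP; lia.
- exists (n + j.-1 - k); first lia. rewrite /kfun; case: ifP; lia.
Qed.

Lemma ceil_eq n t : 0 < n -> ceil_div t.+1 n = (t %/ n).+1.
Proof.
move=> n0; rewrite /ceil_div.
have -> : t.+1 + n.-1 = 1 * n + t by lia.
by rewrite divnMDl // add1n.
Qed.

Lemma lt_q n m q d : 2 <= n -> m <= n * (n - 1) -> q * n.-1 + d < m -> q < n.
Proof.
move=> n2 hm h; have : q * n.-1 < n * n.-1 by lia.
rewrite ltn_pmul2r //; lia.
Qed.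

Lemma Garc_iff n m j k : 2 <= n -> m <= n * (n - 1) ->
  Garc n m j k <-> exists q d, [/\ d < n.-1, q * n.-1 + d < m, j = q.+1 & k = kfun n q.+1 d].
Proof.
move=> n2 hm; split.
- case=> i [/andP[i1 im]]; rewrite /Garc_i.
  case: i i1 im => // t _ tm [<- <-].
  have N0 : 0 < n.-1 by lia.
  exists (t %/ n.-1), (t %% n.-1).
  have td := divn_eq t n.-1.
  have dlt : t %% n.-1 < n.-1 by rewrite ltn_mod.
  have qn : t %/ n.-1 < n by apply: (@lt_q n m _ (t %% n.-1) n2 hm); rewrite -td.
  split => //; first by rewrite -td.
  - by rewrite ceil_eq.
  - by rewrite -kfun_mod // /= -td.
- case=> q [d [dlt tm -> ->]].
  have qn := @lt_q n m q d n2 hm tm.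
  exists (q * n.-1 + d).+1; split; first by apply/andP; split.
  rewrite /Garc_i ceil_eq; last lia.
  rewrite divnMDl; last lia.
  rewrite divn_small // addn0 -(@kfun_mod n q.+1 d) //; apply/andP; split; lia.
Qed.

Theorem proposition1 (n m : nat) :
  2 <= n -> m <= n * (n - 1) ->
  let kappa := m %/ (n - 1) in
  exists S : seq nat,
    [/\ uniq S,
        size S = m - kappa * (n - 1),
        (0 < size S -> 1 <= kappa.+1 <= n),
        (forall v, v \in S -> 1 <= v <= n /\ v <> kappa.+1)
      & (forall j k, Garc n m j k <->
           ((exists r, 1 <= r <= kappa /\ star_arc n r j k)
            \/ (j = kappa.+1 /\ k \in S)))].
Proof.
move=> n2 hm kappa.
have eN : n - 1 = n.-1 by lia.
have N0 : 0 < n.-1 by lia.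
have md := divn_eq m n.-1.
have rlt : m %% n.-1 < n.-1 by rewrite ltn_mod.
rewrite /kappa eN in md *.
set K := m %/ n.-1 in md *.
set rem := m %% n.-1 in md rlt *.
have Kn : K <= n.
  have : K * n.-1 <= n * n.-1 by lia.
  by rewrite leq_pmul2r.
have Kn' : 0 < rem -> K < n.
  move=> r0; have : K * n.-1 < n * n.-1 by lia.
  by rewrite ltn_pmul2r.
have remE : m - K * n.-1 = rem by lia.
exists (map (kfun n K.+1) (iota 0 rem)); split.
- rewrite map_inj_in_uniq ?iota_uniq // => d1 d2; rewrite !mem_iota => h1 h2.
  apply: kfun_inj; last lia; last lia.
  have := Kn' ltac:(lia); lia.
- by rewrite size_map size_iota remE.
- rewrite size_map size_iota => /Kn' ?; lia.
- move=> v /mapP [d]; rewrite mem_iota => hd ->.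
  apply: kfun_range; last lia.
  have := Kn' ltac:(lia); lia.
move=> j k; rewrite Garc_iff // ?eN //; split.
- case=> q [d [dlt tm -> ->]].
  case: (ltnP q K) => qK.
  + left; exists q.+1; split; first lia.
    have qn : q < n by lia.
    have [h1 h2] := @kfun_range n q.+1 d ltac:(lia) dlt.
    by split.
  + right.
    have qE : q = K.
      apply/eqP; rewrite eqn_leq qK andbT; case: leqP => // hq.
      have : K.+1 * n.-1 <= q * n.-1 by rewrite leq_pmul2r.
      lia.
    subst q; split => //; apply: map_f; rewrite mem_iota; lia.
- case.
  + case=> r [hr [-> [hk kr]]].
    have [d dlt <-] := @kfun_surj n r k ltac:(lia) hk kr.
    exists r.-1, d; split => //; last by rewrite prednK //; lia.
    have : r * n.-1 <= K * n.-1 by rewrite leq_pmul2r //; lia.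
    have : r * n.-1 = r.-1 * n.-1 + n.-1 by rewrite -mulSnr prednK //; lia.
    lia.
  + case=> -> /mapP [d]; rewrite mem_iota => hd ->.
    exists K, d; split => //; lia.
Qed.
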